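(* For every symmetric monoidal restriction category $\mathbf C$, setting $\overline{[f,E]}=[\rho_A^{-1}\circ\overline f,\,I]$ for $[f,E]\colon A\to B$ gives a well-defined restriction structure on $\mathrm{Aux}(\mathbf C)$.
   Context: A restriction category is a category equipped with an assignment to each morphism $f\colon A\to B$ of an endomorphism $\overline{f}\colon A\to A$ such that (i) $f\circ\overline f=f$; (ii) $\overline f\circ\overline g=\overline g\circ\overline f$ whenever $f,g$ have a common domain; (iii) $\overline{g\circ\overline f}=\overline g\circ\overline f$ whenever $f,g$ have a common domain; (iv) $\overline g\circ f=f\circ\overline{g\circ f}$ whenever $g\circ f$ is defined. A morphism $f$ is total if $\overline f=\mathrm{id}$. A (symmetric) monoidal restriction category is a restriction category with a (symmetric) monoidal structure such that $\overline{f\otimes g}=\overline f\otimes\overline g$. Let $\mathbf C$ be a symmetric monoidal restriction category with tensor unit $I$, associator $\alpha$, left unitor $\lambda$, right unitor $\rho$. For morphisms $f\colon A\to B\otimes E$ and $f'\colon A\to B\otimes E'$ write $f\triangleright f'$ if $\overline f=\overline{f'}$ and there is a morphism $h\colon E\to E'$ with $(\mathrm{id}_B\otimes h)\circ f=f'$. Let $\sim$ be the equivalence relation generated by $\triangleright$ (on morphisms of the form $A\to B\otimes X$ for fixed $A,B$ and varying $X$). The category $\mathrm{Aux}(\mathbf C)$ has the objects of $\mathbf C$; a morphism $A\to B$ is a $\sim$-class $[f,E]$ of a morphism $f\colon A\to B\otimes E$ of $\mathbf C$; the composite of $[f,E]\colon A\to B$ and $[g,E']\colon B\to C$ is $[\alpha\circ(g\otimes\mathrm{id}_E)\circ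 f,\;E'\otimes E]$; the identity on $A$ is $[\rho_A^{-1},I]$. *)

(* Defs.v *)
From Stdlib Require Import Relations.

Set Implicit Arguments.

Record SMRCat := {
  ob :> Type;
  hom : ob -> ob -> Type;
  comp : forall A B C : ob, hom B C -> hom A B -> hom A C;
  idm : forall A : ob, hom A A;
  comp_assoc : forall A B C D (f : hom A B) (g : hom B C) (h : hom C D),
      comp h (comp g f) = comp (comp h g) f;
  comp_id_l : forall A B (f : hom A B), comp (idm B) f = f;
  comp_id_r : forall A B (f : hom A B), comp f (idm A) = f;
  rst : forall A B : ob, hom A B -> hom A A;
  rst_R1 : forall A B (f : hom A B), comp f (rst f) = f;
  rst_R2 : forall A B B' (f : hom A B) (g : hom A B'),
      comp (rst f) (rst g) = comp (rst g) (rst f);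
  rst_R3 : forall A B B' (f : hom A B) (g : hom A B'),
      rst (comp g (rst f)) = comp (rst g) (rst f);
  rst_R4 : forall A B C (f : hom A B) (g : hom B C),
      comp (rst g) f = comp f (rst (comp g f));
  tens : ob -> ob -> ob;
  tensm : forall A B C D : ob, hom A B -> hom C D -> hom (tens A C) (tens B D);
  tensm_id : forall A B, tensm (idm A) (idm B) = idm (tens A B);
  tensm_comp : forall A B C A' B' C' (f : hom A B) (g : hom B C)
      (f' : hom A' B') (g' : hom B' C'),
      tensm (comp g f) (comp g' f') = comp (tensm g g') (tensm f f');
  unit : ob;
  alpha : forall A B C, hom (tens (tens A B) C) (tens A (tens B C));
  alpha_inv : forall A B C, hom (tens A (tens B C)) (tens (tens A B) C);
  alpha_iso1 : forall A B C, comp (alpha_inv A B C) (alpha A B C) = idm _;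
  alpha_iso2 : forall A B C, comp (alpha A B C) (alpha_inv A B C) = idm _;
  alpha_nat : forall A B C A' B' C' (f : hom A A') (g : hom B B') (h : hom C C'),
      comp (alpha A' B' C') (tensm (tensm f g) h)
      = comp (tensm f (tensm g h)) (alpha A B C);
  lam : forall A, hom (tens unit A) A;
  lam_inv : forall A, hom A (tens unit A);
  lam_iso1 : forall A, comp (lam_inv A) (lam A) = idm _;
  lam_iso2 : forall A, comp (lam A) (lam_inv A) = idm _;
  lam_nat : forall A A' (f : hom A A'),
      comp (lam A') (tensm (idm unit) f) = comp f (lam A);
  rho : forall A, hom (tens A unit) A;
  rho_inv : forall A, hom A (tens A unit);
  rho_iso1 : forall A, comp (rho_inv A) (rho A) = idm _;
  rho_iso2 : forall A, comp (rho A) (rho_inv A) = idm _;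
  rho_nat : forall A A' (f : hom A A'),
      comp (rho A') (tensm f (idm unit)) = comp f (rho A);
  pentagon : forall A B C D,
      comp (tensm (idm A) (alpha B C D))
           (comp (alpha A (tens B C) D) (tensm (alpha A B C) (idm D)))
      = comp (alpha A B (tens C D)) (alpha (tens A B) C D);
  triangle : forall A B,
      comp (tensm (idm A) (lam B)) (alpha A unit B) = tensm (rho A) (idm B);
  sigma : forall A B, hom (tens A B) (tens B A);
  sigma_invol : forall A B, comp (sigma B A) (sigma A B) = idm _;
  sigma_nat : forall A B A' B' (f : hom A A') (g : hom B B'),
      comp (sigma A' B') (tensm f g) = comp (tensm g f) (sigma A B);
  hexagon : forall A B C,
      comp (alpha B C A) (comp (sigma A (tens B C)) (alpha A B C))
      = comp (tensm (idm B) (sigma A C))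
             (comp (alpha B A C) (tensm (sigma A B) (idm C)));
  rst_tensm : forall A B C D (f : hom A B) (g : hom C D),
      rst (tensm f g) = tensm (rst f) (rst g)
}.

Arguments hom {s} _ _.
Arguments comp {s A B C} g f.
Arguments idm {s} A.
Arguments rst {s A B} f.
Arguments tens {s} _ _.
Arguments tensm {s A B C D} f g.
Arguments unit {s}.
Arguments alpha {s} A B C.
Arguments rho_inv {s} A.

Section Aux.
Variable C : SMRCat.

(** Representatives of morphisms A -> B of Aux(C): pairs (E, f : A -> B (x) E). *)
Definition auxrep (A B : C) : Type := { E : C & hom A (tens B E) }.

Definition aux_tri (A B : C) (p q : auxrep A B) : Prop :=
  rst (projT2 p) = rst (projT2 q) /\
  exists h : hom (projT1 p) (projT1 q),
    comp (tensm (idm B) h) (projT2 p) = projT2 q.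

Definition aux_eq (A B : C) : relation (auxrep A B) :=
  clos_refl_sym_trans _ (@aux_tri A B).

Definition aux_comp (A B D : C) (g : auxrep B D) (f : auxrep A B) : auxrep A D :=
  existT _ (tens (projT1 g) (projT1 f))
    (comp (alpha D (projT1 g) (projT1 f))
          (comp (tensm (projT2 g) (idm (projT1 f))) (projT2 f))).

Definition aux_id (A : C) : auxrep A A := existT _ unit (rho_inv A).

Definition aux_rst (A B : C) (f : auxrep A B) : auxrep A A :=
  existT _ unit (comp (rho_inv A) (rst (projT2 f))).

End Aux.

Arguments aux_eq {C A B} _ _.
Arguments aux_comp {C A B D} g f.
Arguments aux_rst {C A B} f.

(* Main.v *)
Require Import Defs.
From Stdlib Require Import Relations.
From Stdlib Require Import Setoid.
Set Implicit Arguments.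

Section L.
Variable C : SMRCat.
Implicit Types A B : C.

Lemma rho_inv_nat A A' (k : hom A A') :
  comp (tensm k (idm unit)) (rho_inv A) = comp (rho_inv A') k.
Proof.
  rewrite <- (comp_id_l _ _ _ (comp (tensm k (idm unit)) (rho_inv A))).
  rewrite <- (rho_iso1 C A'). rewrite <- comp_assoc. rewrite (comp_assoc _ _ _ _ _ (rho_inv A)).
  rewrite rho_nat. rewrite <- !comp_assoc. rewrite rho_iso2. rewrite comp_id_r. reflexivity.
Qed.

Lemma rst_id A : rst (idm A) = idm A.
Proof. pose proof (rst_R1 C _ _ (idm A)) as H. rewrite comp_id_l in H. exact H. Qed.

Lemma rst_mono A B (t : hom A B) (t' : hom B A) : comp t' t = idm A -> rst t = idm A.
Proof.
  intro H. rewrite <- (comp_id_l _ _ _ (rst t)). rewrite <- H. rewrite <- comp_assoc.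
  rewrite rst_R1. reflexivity.
Qed.

Lemma rst_le A B D (f : hom A B) (g : hom B D) :
  rst (comp g f) = comp (rst f) (rst (comp g f)).
Proof.
  rewrite <- (rst_R1 C _ _ f) at 1. rewrite comp_assoc. rewrite rst_R3. apply rst_R2.
Qed.

Lemma rst_comp_rst A B D (f : hom A B) (g : hom B D) :
  rst (comp (rst g) f) = rst (comp g f).
Proof.
  rewrite rst_R4. rewrite rst_R3. idtac.
symmetry. apply rst_le.
Qed.

Lemma rst_total A B D (t : hom B D) (k : hom A B) :
  rst t = idm B -> rst (comp t k) = rst k.
Proof. intro H. rewrite <- rst_comp_rst, H, comp_id_l. reflexivity. Qed.

Lemma rst_rst A B (f : hom A B) : rst (rst f) = rst f.
Proof.
  pose proof (rst_R3 C _ _ _ f (idm A)) as H. rewrite comp_id_l, rst_id, comp_id_l in H. exact H.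
Qed.

Lemma faithful_I A B (X Y : hom A B) :
  tensm X (idm unit) = tensm Y (idm unit) -> X = Y.
Proof.
  intro H.
  assert (E : forall Z : hom A B, Z = comp (comp (rho C B) (tensm Z (idm unit))) (rho_inv A)).
  { intro Z. rewrite rho_nat. rewrite <- comp_assoc, rho_iso2, comp_id_r. reflexivity. }
  rewrite (E X), (E Y), H. reflexivity.
Qed.

Lemma alpha_cancel A B D W (X Y : hom W (tens (tens A B) D)) :
  comp (alpha A B D) X = comp (alpha A B D) Y -> X = Y.
Proof.
  intro H. rewrite <- (comp_id_l _ _ _ X), <- (comp_id_l _ _ _ Y), <- (alpha_iso1 C A B D).
  rewrite <- !comp_assoc, H. reflexivity.
Qed.

Lemma kelly A B :
  comp (tensm (idm A) (rho C B)) (alpha A B unit) = rho C (tens A B).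
Proof.
  apply faithful_I. apply alpha_cancel.
  transitivity (comp (tensm (idm A) (tensm (idm B) (lam C unit)))
     (comp (tensm (idm A) (alpha B unit unit))
        (comp (alpha A (tens B unit) unit) (tensm (alpha A B unit) (idm unit))))).
  - rewrite (comp_assoc _ _ _ _ _ _ (tensm (idm A) (alpha B unit unit))).
    rewrite <- tensm_comp, comp_id_l, triangle.
    rewrite comp_assoc, <- alpha_nat, <- comp_assoc, <- tensm_comp, comp_id_l.
    reflexivity.
  - rewrite pentagon. rewrite comp_assoc.
rewrite <- alpha_nat. rewrite <- comp_assoc. rewrite tensm_id. rewrite triangle. reflexivity.
Qed.

Lemma kelly_inv A B :
  comp (alpha A B unit) (rho_inv (tens A B)) = tensm (idm A) (rho_inv B).
Proof.
  assert (H : alpha A B unit = comp (tensm (idm A) (rho_inv B)) (rho C (tens A B))).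
  { rewrite <- kelly, comp_assoc, <- tensm_comp, comp_id_l, rho_iso1, tensm_id, comp_id_l.
    reflexivity. }
  rewrite H, <- comp_assoc, rho_iso2, comp_id_r. reflexivity.
Qed.

Lemma triangle_inv A B :
  comp (alpha A unit B) (tensm (rho_inv A) (idm B)) = tensm (idm A) (lam_inv C B).
Proof.
  assert (H : alpha A unit B = comp (tensm (idm A) (lam_inv C B)) (tensm (rho C A) (idm B))).
  { rewrite <- triangle, comp_assoc, <- tensm_comp, comp_id_l, lam_iso1, tensm_id, comp_id_l.
    reflexivity. }
  rewrite H, <- comp_assoc, <- tensm_comp, rho_iso2, comp_id_l, tensm_id, comp_id_r. reflexivity.
Qed.

Lemma total_left A B (t : hom A B) (t' : hom B A) W (k : hom W A) :
  comp t' t = idm A -> rst (comp t k) = rst k.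
Proof. intro H. apply rst_total. eapply rst_mono. exact H. Qed.

Lemma alpha_tot A B D W (k : hom W _) : rst (comp (alpha A B D) k) = rst k.
Proof. eapply total_left. apply alpha_iso1. Qed.

Lemma rhoinv_tot A W (k : hom W A) : rst (comp (rho_inv A) k) = rst k.
Proof. eapply total_left. apply rho_iso2. Qed.

Lemma L1 A B (g : hom A B) W (y : hom W A) :
  comp (tensm g (idm (@unit C))) (comp (rho_inv A) y) = comp (rho_inv B) (comp g y).
Proof. rewrite comp_assoc, rho_inv_nat, <- comp_assoc. reflexivity. Qed.

Lemma aux_refl' A B E (f g : hom A (tens B E)) : f = g ->
  aux_eq (existT (fun E => hom A (tens B E)) E f) (existT _ E g).
Proof. intros ->. apply rst_refl. Qed.

Lemma aux_tri' A B E E' (f : hom A (tens B E)) (g : hom A (tens B E')) (h : hom E E') :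
  rst f = rst g -> comp (tensm (idm B) h) f = g ->
  aux_eq (existT (fun E => hom A (tens B E)) E f) (existT _ E' g).
Proof. intros H1 H2. apply rst_step. split; [exact H1|]. exists h. exact H2. Qed.

Theorem main_aux :
  (forall (A B : C) (f f' : auxrep C A B),
      aux_eq f f' -> aux_eq (aux_rst f) (aux_rst f')) /\
  (forall (A B : C) (f : auxrep C A B),
      aux_eq (aux_comp f (aux_rst f)) f) /\
  (forall (A B B' : C) (f : auxrep C A B) (g : auxrep C A B'),
      aux_eq (aux_comp (aux_rst f) (aux_rst g)) (aux_comp (aux_rst g) (aux_rst f))) /\
  (forall (A B B' : C) (f : auxrep C A B) (g : auxrep C A B'),
      aux_eq (aux_rst (aux_comp g (aux_rst f))) (aux_comp (aux_rst g) (aux_rst f))) /\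
  (forall (A B D : C) (f : auxrep C A B) (g : auxrep C B D),
      aux_eq (aux_comp (aux_rst g) f) (aux_comp f (aux_rst (aux_comp g f)))).
Proof.
  split; [|split; [|split; [|split]]].
  - intros A B f f' H. induction H as [x y Hxy| x | x y _ IH | x y z _ IH1 _ IH2].
    + destruct Hxy as [Hr _]. unfold aux_rst. rewrite Hr. apply rst_refl.
    + apply rst_refl.
    + apply rst_sym. exact IH.
    + eapply rst_trans; eassumption.
  - intros A B [E f]. unfold aux_comp, aux_rst; simpl.
    rewrite L1, rst_R1.
    apply aux_tri' with (h := rho C E).
    + rewrite alpha_tot, rhoinv_tot. reflexivity.
    + rewrite comp_assoc, kelly, comp_assoc, rho_iso2, comp_id_l. reflexivity.
  - intros A B B' [E f] [E' g]. unfold aux_comp, aux_rst; simpl.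
    rewrite !L1, <- !comp_assoc.
    apply aux_refl'. rewrite rst_R2. reflexivity.
  - intros A B B' [E f] [E' g]. unfold aux_comp, aux_rst; simpl.
    rewrite !L1, <- !comp_assoc, alpha_tot, rhoinv_tot, rst_R3.
    apply aux_tri' with (h := rho_inv (@unit C)).
    + rewrite alpha_tot, !rhoinv_tot, rst_R3, !rst_rst. reflexivity.
    + rewrite <- kelly_inv, <- !comp_assoc. reflexivity.
  - intros A B D [E f] [E' g]. unfold aux_comp, aux_rst; simpl.
    rewrite alpha_tot, L1.
    assert (Ht : forall X Y Z (a : hom Y Z) (b : hom X Y),
      tensm (comp a b) (idm E) = comp (tensm a (idm E)) (tensm b (idm E))).
    { intros. rewrite <- tensm_comp, comp_id_l. reflexivity. }
    rewrite Ht.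
    assert (Hr : tensm (rst g) (idm E) = rst (tensm g (idm E))).
    { rewrite rst_tensm, rst_id. reflexivity. }
    rewrite Hr, <- comp_assoc, rst_R4, comp_assoc, triangle_inv.
    rewrite (comp_assoc _ _ _ _ _ _ (rho_inv (tens B E))), kelly_inv.
    set (r := rst (comp (tensm g (idm E)) f)).
    apply rst_trans with (y := existT _ E (comp f r)).
    + apply rst_sym. apply aux_tri' with (h := lam_inv C E).
      * symmetry. eapply total_left. rewrite <- tensm_comp, comp_id_l, lam_iso2, tensm_id. reflexivity.
      * reflexivity.
    + apply aux_tri' with (h := rho_inv E).
      * symmetry. eapply total_left. rewrite <- tensm_comp, comp_id_l, rho_iso2, tensm_id. reflexivity.
      * reflexivity.
Qed.
End L.

Theorem proposition3p6 (C : SMRCat) :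
  (* well-defined on ~-classes *)
  (forall (A B : C) (f f' : auxrep C A B),
      aux_eq f f' -> aux_eq (aux_rst f) (aux_rst f')) /\
  (* (i) f o bar f = f *)
  (forall (A B : C) (f : auxrep C A B),
      aux_eq (aux_comp f (aux_rst f)) f) /\
  (* (ii) *)
  (forall (A B B' : C) (f : auxrep C A B) (g : auxrep C A B'),
      aux_eq (aux_comp (aux_rst f) (aux_rst g)) (aux_comp (aux_rst g) (aux_rst f))) /\
  (* (iii) *)
  (forall (A B B' : C) (f : auxrep C A B) (g : auxrep C A B'),
      aux_eq (aux_rst (aux_comp g (aux_rst f))) (aux_comp (aux_rst g) (aux_rst f))) /\
  (* (iv) *)
  (forall (A B D : C) (f : auxrep C A B) (g : auxrep C B D),
      aux_eq (aux_comp (aux_rst g) f) (aux_comp f (aux_rst (aux_comp g f)))).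
Proof. exact (main_aux C). Qed.
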